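(* Let $n\ge2$, $a\ge\sqrt{n-1}$, $f(x)=a|x^{(1)}|+\sum_{i=2}^n x^{(i)}$ on $\mathbb{R}^n$, and $0<c_1<c_2<1$; let $\tau=c_1+\frac{(n-1)(c_1-1)}{a^2}$. Let $x_k\in\mathbb{R}^n$ with $x_k^{(1)}\ne0$, $d_k=-\nabla f(x_k)$, and $t_k\in\mathbb{R}$. Suppose $W(t_k)$ holds. Then $A(t_k)$ holds if and only if $$(1+\tau)\frac{at_k}{2}\le |x_k^{(1)}|.$$
   Context: $x^{(i)}$ is the $i$-th coordinate. The Armijo condition is $A(t)$: $f(x_k+td_k)\le f(x_k)+c_1t\nabla f(x_k)^Td_k$; the Wolfe condition is $W(t)$: $f$ is differentiable at $x_k+td_k$ and $\nabla f(x_k+td_k)^Td_k\ge c_2\nabla f(x_k)^Td_k$. *)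

(* Defs.v *)
From HB Require Import structures.
From mathcomp Require Import all_boot all_order all_algebra.
From mathcomp Require Import all_classical all_reals all_analysis.
Set Implicit Arguments. Unset Strict Implicit. Unset Printing Implicit Defensive.
Import Order.TTheory GRing.Theory Num.Theory.
Import numFieldNormedType.Exports.
Local Open Scope ring_scope.

Section Defs.
Variables (R : realType) (n : nat).

(** x^{(1)}: the first coordinate (index 0) of x : 'rV[R]_n (n >= 1). *)
Definition coord1 (x : 'rV[R]_n) : R := \sum_(i < n | val i == 0%N) x 0 i.

Definition fpaper (a : R) (x : 'rV[R]_n) : R :=
  a * `|coord1 x| + \sum_(i < n | val i != 0%N) x 0 i.

Definition grad (f : 'rV[R]_n -> R) (x : 'rV[R]_n) : 'rV[R]_n :=
  \row_(i < n) ('d f x) (delta_mx 0 i).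

Definition dot (u v : 'rV[R]_n) : R := \sum_(i < n) u 0 i * v 0 i.

Definition armijo (f : 'rV[R]_n -> R) (c1 : R) (x d : 'rV[R]_n) (t : R) : Prop :=
  f (x + t *: d) <= f x + c1 * t * dot (grad f x) d.

Definition wolfe (f : 'rV[R]_n -> R) (c2 : R) (x d : 'rV[R]_n) (t : R) : Prop :=
  differentiable f (x + t *: d) /\
  dot (grad f (x + t *: d)) d >= c2 * dot (grad f x) d.
End Defs.

(* Main.v *)
Require Import Defs.
From HB Require Import structures.
From mathcomp Require Import all_boot all_order all_algebra.
From mathcomp Require Import all_classical all_reals all_analysis.
From mathcomp Require Import lra ring.
Import Order.TTheory GRing.Theory Num.Theory.
Import numFieldNormedType.Exports.
Local Open Scope ring_scope.
Section S.
Variables (R : realType) (n : nat).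
Implicit Types (x y w u v : 'rV[R]_n).

Lemma dot_lin w : linear (@dot R n w).
Proof.
move=> k u v; rewrite /dot scaler_sumr -big_split /=; apply: eq_bigr => i _.
by rewrite !mxE mulrDr mulrCA.
Qed.
HB.instance Definition _ w := GRing.isLinear.Build R 'rV[R]_n R _ (@dot R n w) (dot_lin w).

Lemma dot_cont w : continuous (@dot R n w).
Proof.
rewrite /dot.
apply: (@continuous_big R 'I_n +%R 0 _ add_continuous) => i _.
move=> x. apply: (@continuousM R _ (fun _ => w 0 i) (fun v : 'rV[R]_n => v 0 i)).
  exact: cst_continuous.
exact: coord_continuous.
Qed.

Lemma dot_delta w i : @dot R n w (delta_mx 0 i) = w 0 i.
Proof.
rewrite /dot (bigD1 i) //= big1 ?addr0; first by rewrite mxE !eqxx mulr1.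
by move=> j ji; rewrite mxE eqxx (negbTE ji) mulr0.
Qed.

Lemma grad_loc (f : 'rV[R]_n -> R) y w (c : R) :
  (\forall h \near (0 : 'rV[R]_n), f (h + y) = dot w (h + y) + c) -> grad f y = w.
Proof.
move=> H.
have fy : f y = dot w y + c.
  by have := nbhs_singleton H; rewrite add0r.
have dE : 'd f y = @dot R n w :> (_ -> _).
  apply: diff_unique; first exact: dot_cont.
  apply/eqaddoP => eps eps0; near=> h => /=.
  have -> : ((f \o +%R^~ y) - (cst (f y) + dot w)) h = f (h + y) - (f y + dot w h) by [].
  have -> : f (h + y) = dot w (h + y) + c by near: h.
  rewrite fy linearD /= [dot w y + c + _]addrC addrA subrr normr0.
  by rewrite mulr_ge0 // ltW.
apply/rowP => i; rewrite mxE.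
by rewrite dE dot_delta.
Unshelve. all: by end_near.
Qed.


Definition S1 (x : 'rV[R]_n) : R := \sum_(i < n | val i != 0%N) x 0 i.

Lemma coord1E (i0 : 'I_n) x : val i0 = 0%N -> coord1 x = x 0 i0.
Proof.
move=> h0; rewrite /coord1 (big_pred1 i0) // => i /=.
by apply/eqP/eqP => [hi|->//]; apply: val_inj; rewrite /= hi h0.
Qed.

Lemma S1_lin u v (t : R) : S1 (u + t *: v) = S1 u + t * S1 v.
Proof.
rewrite /S1 mulr_sumr -big_split /=; apply: eq_bigr => i _.
by rewrite !mxE.
Qed.

Lemma sign_lem (u v : R) : `|u - v| < `|v| -> `|u| = Num.sg v * u.
Proof.
have [v0|v0|->] := ltrgtP v 0.
- rewrite ltr0_sg // (ltr0_norm v0) => /ltr_normlP [h1 h2].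
  have u0 : u < 0 by lra.
  by rewrite ltr0_norm // mulN1r.
- rewrite gtr0_sg // (gtr0_norm v0) => /ltr_normlP [h1 h2].
  have u0 : 0 < u by lra.
  by rewrite gtr0_norm // mul1r.
- by rewrite normr0 ltNge normr_ge0.
Qed.

Lemma coord_le_norm (h : 'rV[R]_n) i : `|h 0 i| <= `|h|.
Proof.
change (`|h 0 i| <= mx_norm h); rewrite mx_normrE.
exact: (le_bigmax 0 (fun ij : 'I_1 * 'I_n => `|h ij.1 ij.2|) (0, i)).
Qed.

Section A.
Variable a : R.
Definition wv (s : R) : 'rV[R]_n := \row_i (if val i == 0%N then a * s else 1).

Lemma dot_wv (i0 : 'I_n) s x : val i0 = 0%N ->
  dot (wv s) x = a * s * coord1 x + S1 x.
Proof.
move=> h0; rewrite /dot (bigID (fun i : 'I_n => val i == 0%N)) /=.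
rewrite /coord1 mulr_sumr /S1; congr (_ + _); apply: eq_bigr => i hi.
  by rewrite mxE hi.
by rewrite mxE (negbTE hi) mul1r.
Qed.

Lemma grad_fpaper (i0 : 'I_n) y : val i0 = 0%N -> coord1 y != 0 ->
  grad (fpaper a) y = wv (Num.sg (coord1 y)).
Proof.
move=> h0 y0; apply: (@grad_loc _ _ _ 0).
have cy : 0 < `|coord1 y| by rewrite normr_gt0.
near=> h.
have hs : `|h| < `|coord1 y|.
  near: h. have := @nbhs0_lt R ('rV[R]_n) _ cy. exact.
rewrite addr0 (dot_wv _ _ _ h0) /fpaper; congr (_ + _).
rewrite (@sign_lem _ (coord1 y)) ?mulrA //.
rewrite !(coord1E _ _ h0) mxE addrK.
rewrite -(coord1E _ _ h0); exact: le_lt_trans (coord_le_norm _ _) hs.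
Unshelve. all: by end_near.
Qed.

End A.
Section B.
Variable a : R.
Lemma fpaperE x : fpaper a x = a * `|coord1 x| + S1 x. Proof. by []. Qed.
Lemma nondiff (i0 : 'I_n) y : val i0 = 0%N -> 0 < a -> coord1 y = 0 ->
  ~ differentiable (fpaper a) y.
Proof.
move=> h0 a0 cy0 /(@diff_derivable _ _ _ _ _ (delta_mx 0 i0)).
rewrite /derivable => /cvgr_dist_lt /(_ a a0).
set l := lim _.
have qE (h : R) : h != 0 -> h^-1 *: ((fpaper a \o shift y) (h *: delta_mx 0 i0) - fpaper a y) = a * Num.sg h.
  move=> hn0.
  rewrite /= !fpaperE ![_ *: _ + y]addrC S1_lin cy0.
  have -> : S1 (delta_mx 0 i0) = 0.
    rewrite /S1 big1 // => i hi; rewrite mxE eqxx /=.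
    case: eqP => // ei; move: hi; by rewrite ei h0.
  have y0 : y 0 i0 = 0 by rewrite -(coord1E _ _ h0).
  rewrite (coord1E _ _ h0) !mxE !eqxx /= y0 add0r mulr1 mulr0 addr0 normr0 mulr0 add0r addrK.
  rewrite normrEsg -[_ *: _]/(h^-1 * _); field.
  done.
rewrite /dnbhs /within /= => /nbhs_ballP[e /= e0 He].
have e2 : 0 < e / 2 by rewrite divr_gt0.
have b1 : ball 0 e (e / 2) by rewrite -ball_normE /= sub0r normrN gtr0_norm // ltr_pdivrMr // ltr_pMr // ltr1n.
have b2 : ball 0 e (- (e / 2)) by rewrite -ball_normE /= sub0r opprK gtr0_norm // ltr_pdivrMr // ltr_pMr // ltr1n.
have := He _ b1; rewrite qE ?gt_eqF // gtr0_sg // mulr1 => /(_ isT) h1.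
have := He _ b2; rewrite qE ?lt_eqF ?oppr_lt0 // ltr0_sg ?oppr_lt0 // mulrN1 => /(_ isT) h2.
move/ltr_normlP: h1 => [h1 _]; move/ltr_normlP: h2 => [_ h2].
rewrite opprB ltrBlDr ltrDl in h1.
rewrite opprK gtrDr in h2.
by have := lt_trans h1 h2; rewrite ltxx.
Qed.

Lemma S1N w : S1 (- w) = - S1 w.
Proof. by rewrite /S1 -sumrN; apply: eq_bigr => i _; rewrite mxE. Qed.

Lemma coord1_lin (i0 : 'I_n) u v t : val i0 = 0%N -> coord1 (u + t *: v) = coord1 u + t * coord1 v.
Proof. by move=> h0; rewrite !(coord1E _ _ h0) !mxE. Qed.

Lemma coord1N (i0 : 'I_n) w : val i0 = 0%N -> coord1 (- w) = - coord1 w.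
Proof. by move=> h0; rewrite !(coord1E _ _ h0) !mxE. Qed.

Lemma coord1_wv (i0 : 'I_n) s : val i0 = 0%N -> coord1 (wv a s) = a * s.
Proof. by move=> h0; rewrite (coord1E _ _ h0) mxE h0 eqxx. Qed.

Lemma S1_wv (i0 : 'I_n) s : val i0 = 0%N -> S1 (wv a s) = n%:R - 1.
Proof.
move=> h0.
have : \sum_(i < n) (1 : R) = n%:R by rewrite sumr_const card_ord.
rewrite (bigID (fun i : 'I_n => val i == 0%N)) /= (big_pred1 i0); last first.
  by move=> i /=; apply/eqP/eqP => [hi|->//]; apply: val_inj; rewrite /= hi h0.
move=> <-; rewrite addrC addrK /S1; apply: eq_bigr => i hi.
by rewrite mxE (negbTE hi).
Qed.

Lemma sg_sqr (x : R) : x != 0 -> Num.sg x * Num.sg x = 1.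
Proof.
by rewrite neq_lt => /orP[h|h]; rewrite ?(ltr0_sg h) ?(gtr0_sg h) ?mulrNN mulr1.
Qed.

Lemma sg_abs (x : R) : `|x| = Num.sg x * x.
Proof. exact: normrEsg. Qed.

End B.
End S.
Arguments wv {R n} a s.
Arguments S1 {R n} x.

Theorem lemma2 (R : realType) (n : nat) (a c1 c2 : R) (xk : 'rV[R]_n) (tk : R) :
  (2 <= n)%N ->
  Num.sqrt (n%:R - 1) <= a ->
  0 < c1 -> c1 < c2 -> c2 < 1 ->
  coord1 xk != 0 ->
  let f := fpaper a in
  let tau := c1 + (n%:R - 1) * (c1 - 1) / a ^+ 2 in
  let dk := - grad f xk in
  wolfe f c2 xk dk tk ->
  (armijo f c1 xk dk tk <-> (1 + tau) * (a * tk / 2) <= `|coord1 xk|).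
Proof.
move=> hn ha c10 c12 c21 x0 f tau dk.
have n0 : (0 < n)%N by apply: leq_trans hn.
pose i0 : 'I_n := Ordinal n0.
have h0 : val i0 = 0%N by [].
set N : R := n%:R - 1.
have N1 : 1 <= N.
  rewrite /N lerBrDr (_ : 1 + 1 = 2%:R) // ler_nat //.
have N0 : 0 <= N by apply: le_trans N1.
have sq0 : 0 <= Num.sqrt N by apply: sqrtr_ge0.
have sqN : Num.sqrt N ^+ 2 = N by rewrite sqr_sqrtr.
have sq1 : 1 <= Num.sqrt N by rewrite -sqrtr1 ler_sqrt //.
have a0 : 0 < a by apply: lt_le_trans ha; apply: lt_le_trans sq1.
have aN : N <= a ^+ 2.
  by rewrite -sqN ler_pXn2r // ?nnegrE // ltW.
set x1 := coord1 xk.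
set s := Num.sg x1.
have ss : s * s = 1 by exact: sg_sqr.
have gE : grad f xk = wv a s by apply: (@grad_fpaper R n a i0 xk h0 x0).
have dkE : dk = - wv a s by rewrite /dk gE.
have dotE t u : dot (@wv R n a t) (@wv R n a u) = a * t * (a * u) + N.
  by rewrite (@dot_wv R n a i0 _ _ h0) (@coord1_wv R n a i0 _ h0) (@S1_wv R n a i0 _ h0).
have dotN t u : dot (@wv R n a t) (- @wv R n a u) = - (a * t * (a * u) + N).
  by rewrite linearN /= dotE.
set y := xk + tk *: dk.
have cyE : coord1 y = x1 - tk * (a * s).
  by rewrite /y (@coord1_lin R n i0 _ _ _ h0) dkE (@coord1N R n i0 _ h0) (@coord1_wv R n a i0 _ h0) mulrN.
have SyE : S1 y = S1 xk - tk * N.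
  by rewrite /y S1_lin dkE S1N (@S1_wv R n a i0 _ h0) mulrN.
move=> [dy Wc].
have cy0 : coord1 y != 0.
  by apply/negP => /eqP cy0; apply: (@nondiff R n a i0 y h0 a0 cy0).
set s' := Num.sg (coord1 y).
have ss' : s' * s' = 1 by exact: sg_sqr.
move: Wc; rewrite -/y (@grad_fpaper R n a i0 y h0 cy0) -/s' gE dkE !dotN => Wc.
have p1 : s' * s = -1.
  have pp : (s' * s - 1) * (s' * s + 1) = 0.
    have -> : (s' * s - 1) * (s' * s + 1) = (s' * s') * (s * s) - 1 by ring.
    by rewrite ss ss' mulr1 subrr.
  move/eqP: pp; rewrite mulf_eq0 => /orP[|]; last by rewrite addr_eq0 => /eqP.
  rewrite subr_eq0 => /eqP p1; exfalso.
  have : a * s' * (a * s) = a ^+ 2 by rewrite mulrACA p1 mulr1 expr2.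
  have : a * s * (a * s) = a ^+ 2 by rewrite mulrACA ss mulr1 expr2.
  move=> e1 e2; rewrite e1 e2 in Wc.
  have AN : 0 < a ^+ 2 + N by rewrite ltr_pwDl // exprn_gt0.
  have c2' : 0 < 1 - c2 by rewrite subr_gt0.
  have := mulr_gt0 AN c2'.
  move: Wc; move: (a ^+ 2 + N) => X Wc.
  nra.
have s'E : s' = - s.
  by rewrite -[s']mulr1 -ss mulrA p1 mulN1r.
set X := `|x1|.
have XE : X = s * x1 by rewrite /X sg_abs.
have cyA : `|coord1 y| = tk * a - X.
  rewrite sg_abs -/s' s'E cyE XE.
  have -> : - s * (x1 - tk * (a * s)) = tk * a * (s * s) - s * x1 by ring.
  by rewrite ss mulr1.
rewrite -dkE /armijo -/y /f !fpaperE cyA SyE gE dkE dotN -/x1 -/X.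
have -> : a * s * (a * s) = a ^+ 2 by rewrite mulrACA ss mulr1 expr2.
set D := tk * (a ^+ 2 * (1 + c1) + N * (c1 - 1)) - 2 * a * X.
rewrite -subr_le0 -[(1 + tau) * _ <= X]subr_le0.
have -> : a * (tk * a - X) + (S1 xk - tk * N) - (a * X + S1 xk + c1 * tk * - (a ^+ 2 + N)) = D.
  rewrite /D; ring.
have -> : (1 + tau) * (a * tk / 2) - X = D * (2 * a)^-1.
  rewrite /D /tau -/N; field.
  by rewrite gt_eqF.
rewrite pmulr_lle0 // invr_gt0 mulr_gt0 //.
Qed.
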